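(* Let $y_1,\dots,y_n$ be real-valued and $n$ times continuously differentiable on an open interval $I$, and let $x\in I$. With $W_n(x)=\det\big(y_j^{(i-1)}(x)\big)_{i,j=1}^n$ and $C_n^h(x)=\det\big(y_j(x+(i-1)h)\big)_{i,j=1}^n$: if $W_n(x)>0$ (resp. $W_n(x)<0$), then there is $h_0>0$ such that $C_n^h(x)>0$ (resp. $C_n^h(x)<0$) for all $0<h<h_0$. *)

(* Defs.v *)
From HB Require Import structures.
From mathcomp Require Import all_boot all_order all_algebra.
From mathcomp Require Import all_classical all_reals all_analysis.
Set Implicit Arguments. Unset Strict Implicit. Unset Printing Implicit Defensive.
Import Order.TTheory GRing.Theory Num.Theory.
Import numFieldNormedType.Exports.
Local Open Scope classical_set_scope.
Local Open Scope ring_scope.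

Definition open_interval {R : realType} (I : set R) : Prop :=
  open I /\ is_interval I.

Definition Cn_on {R : realType} (n : nat) (I : set R) (f : R -> R) : Prop :=
  (forall k, (k < n)%N -> forall x, I x -> derivable (derive1n k f) x 1) /\
  (forall x, I x -> {for x, continuous (derive1n n f)}).

(* Wronskian W_n(x) = det (y_j^{(i-1)}(x))_{i,j}  (0-indexed here). *)
Definition wronskian {R : realType} (n : nat) (y : 'I_n -> R -> R) (x : R) : R :=
  \det (\matrix_(i < n, j < n) derive1n i (y j) x).

(* Casoratian C_n^h(x) = det (y_j(x + (i-1) h))_{i,j}  (0-indexed here). *)
Definition casoratian {R : realType} (n : nat) (y : 'I_n -> R -> R) (h x : R) : R :=
  \det (\matrix_(i < n, j < n) y j (x + (i%:R) * h)).

(* Main.v *)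
Require Import Defs.
From HB Require Import structures.
From mathcomp Require Import all_boot all_order all_algebra.
From mathcomp Require Import all_classical all_reals all_analysis.
Set Implicit Arguments. Unset Strict Implicit. Unset Printing Implicit Defensive.
Import Order.TTheory GRing.Theory Num.Theory.
Import numFieldNormedType.Exports.
From mathcomp Require Import lra ring zify.
Local Open Scope classical_set_scope.
Local Open Scope ring_scope.

Section S.
Variable R : realType.

Lemma shift_fun_eq (D : R -> R) (c s : R) :
  (fun h : R => h^-1 *: (((fun t => D (t + c)) \o shift s) (h *: 1) - D (s + c)))
  = (fun h : R => h^-1 *: ((D \o shift (s + c)) (h *: 1) - D (s + c))).
Proof. by apply/funext => h /=; rewrite addrA. Qed.

Lemma is_derive_shiftc (D : R -> R) (c s d : R) :
  is_derive (s + c) 1 D d -> is_derive s 1 (fun t => D (t + c)) d.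
Proof.
move=> [dD vD]; split.
  by rewrite /derivable shift_fun_eq.
by rewrite /derive shift_fun_eq -vD.
Qed.

Fixpoint diffop (h : R) (i : nat) (g : R -> R) : R -> R :=
  match i with 0 => g | i'.+1 => fun t => diffop h i' g (t + h) - diffop h i' g t end.

Lemma diffop_deriv h i (g : R -> R) s :
  (forall j, (j <= i)%N -> derivable g (s + j%:R * h) 1) ->
  is_derive s 1 (diffop h i g) (diffop h i (derive1 g) s).
Proof.
elim: i s => [|i IH] s H /=.
  have := H 0%N (leqnn 0); rewrite mul0r addr0 => dg.
  by rewrite derive1E; apply: derivableP.
apply: is_deriveB.
  apply: is_derive_shiftc; apply: IH => j ji.
  have -> : s + h + j%:R * h = s + j.+1%:R * h.
    by rewrite -natr1 mulrDl mul1r; lra.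
  by apply: H.
by apply: IH => j ji; apply: H; apply: leqW.
Qed.

Lemma diffop_mvt (f : R -> R) (n : nat) (J : set R)
  (Hd : forall k, (k < n)%N -> forall t, J t -> derivable (derive1n k f) t 1)
  h (hp : 0 < h) i : forall k s, (k + i < n)%N ->
  (forall t, s <= t <= s + i%:R * h -> J t) ->
  exists xi, (s <= xi <= s + i%:R * h) /\
    (diffop h i (derive1n k f) s = h ^+ i * derive1n (k + i) f xi).
Proof.
elim: i => [|i IH] k s ki HJ.
  exists s; rewrite mul0r addr0 lexx expr0 mul1r addn0; split => //.
have kn : (k < n)%N by apply: leq_ltn_trans ki; apply: leq_addr.
have Hder : forall t, s <= t <= s + h ->
    is_derive t 1 (diffop h i (derive1n k f)) (diffop h i (derive1n k.+1 f) t).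
  move=> t /andP[st th]; rewrite derive1nS; apply: diffop_deriv => j ji.
  apply: Hd => //; apply: HJ.
  have jh : 0 <= j%:R * h by apply: mulr_ge0 => //; apply: ltW.
  have : j%:R * h <= i%:R * h by rewrite ler_pM2r // ler_nat.
  rewrite -natr1 mulrDl mul1r => ?; apply/andP; split; lra.
have [c cI Hc] : exists2 c, c \in `]s, s + h[ &
   diffop h i (derive1n k f) (s + h) - diffop h i (derive1n k f) s =
   diffop h i (derive1n k.+1 f) c * (s + h - s).
  apply: MVT; first lra.
    move=> t; rewrite in_itv /= => /andP[st th]; apply: Hder; apply/andP; split; lra.
  apply: derivable_within_continuous => t; rewrite in_itv /= => /andP[st th].
  have [dd _] := Hder t ltac:(apply/andP; split; lra); exact: dd.
move: cI; rewrite in_itv /= => /andP[sc ch].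
have HJ' : forall t, c <= t <= c + i%:R * h -> J t.
  move=> t /andP[ct tc]; apply: HJ; rewrite -natr1 mulrDl mul1r; apply/andP; split; lra.
have [xi [/andP[cx xc] Hxi]] := IH k.+1 c ltac:(by rewrite addSnnS) HJ'.
exists xi; split.
  apply/andP; split; first lra.
  move: xc; rewrite -natr1 mulrDl mul1r; lra.
rewrite /= Hc Hxi addSnnS exprS; ring.
Qed.

Definition cb (i k : nat) : R := (-1) ^+ (i - k) * 'C(i, k)%:R.

Lemma cb_step i k : cb i.+1 k.+1 = cb i k - cb i k.+1.
Proof.
rewrite /cb subSS binS natrD.
case: (ltnP k i) => ki.
  have -> : (i - k = (i - k.+1).+1)%N by rewrite subnSK.
  rewrite exprS; ring.
rewrite (bin_small (n:=i)) ?mulr0 ?subr0 ?add0r //.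
Qed.

Lemma diffop_binom h (g : R -> R) i : forall m s, (i < m)%N ->
  diffop h i g s = \sum_(k < m) cb i k * g (s + k%:R * h).
Proof.
elim: i => [|i IH] [|m] s // im.
  rewrite big_ord_recl /= /cb subnn expr0 bin0 mul0r addr0 mulr1n !mul1r big1 ?addr0 //.
  by move=> k _; rewrite bin0n mulr0 mul0r.
rewrite /= (IH m (s + h) im) (IH m.+1 s (ltnW im)) big_ord_recl [RHS]big_ord_recl.
have E : \sum_(i0 < m) cb i.+1 (lift ord0 i0) * g (s + (lift ord0 i0)%:R * h) =
  \sum_(k < m) cb i k * g (s + h + k%:R * h) -
  \sum_(i0 < m) cb i (lift ord0 i0) * g (s + (lift ord0 i0)%:R * h).
  rewrite -sumrB; apply: eq_bigr => k _; rewrite lift0 /= cb_step.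
  have -> : s + h + k%:R * h = s + k.+1%:R * h by rewrite -natr1 mulrDl mul1r; lra.
  ring.
rewrite E /= /cb !subn0 !bin0 exprS; ring.
Qed.

Lemma near_right0_ex (P : R -> Prop) :
  (\forall h \near 0^'+, P h) -> exists2 h0 : R, 0 < h0 & forall h, 0 < h -> h < h0 -> P h.
Proof.
rewrite near_withinE => /nbhs_ballP [e /= e0 He]; exists e => // h h0 he.
apply: He => //; rewrite /ball /= sub0r normrN gtr0_norm //.
Qed.

Lemma nbhs_ex (x : R) (P : R -> Prop) :
  (\forall t \near x, P t) -> exists2 d : R, 0 < d & forall t, `|x - t| < d -> P t.
Proof.
move=> /nbhs_ballP [e /= e0 He]; exists e => // t ht; apply: He.
Qed.

Lemma cont_eps (f : R -> R) (x e : R) : derivable f x 1 -> 0 < e ->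
  exists2 d : R, 0 < d & forall t, `|x - t| < d -> `|f x - f t| < e.
Proof.
move=> /derivable1_diffP /differentiable_continuous fc e0.
apply: nbhs_ex; move/cvgrPdist_lt : fc; apply; exact: e0.
Qed.

Lemma cvg_det n (G : R -> 'M[R]_n) (A : 'M[R]_n) :
  (forall i j, (fun h => G h i j) @ 0^'+ --> A i j) ->
  (fun h => \det (G h)) @ 0^'+ --> \det A.
Proof.
move=> HG; rewrite /determinant.
apply: (@cvg_big R _ +%R 0 xpredT add_continuous).
move=> s _; apply: cvgM; first exact: cvg_cst.
apply: (@cvg_big R _ *%R 1 xpredT mul_continuous).
by move=> i _; apply: HG.
Qed.
End S.

Lemma casor_eq (R : realType) n (y : 'I_n -> R -> R) (h x : R) : 0 < h ->
  casoratian y h x = (\prod_(i < n) h ^+ i) *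
     \det (\matrix_(i < n, j < n) (diffop h i (y j) x / h ^+ i)).
Proof.
move=> hp; rewrite /casoratian.
set M := \matrix_(i < n, j < n) y j (x + i%:R * h).
set L := \matrix_(i < n, k < n) cb R i k.
set D := \matrix_(i < n, j < n) diffop h i (y j) x.
have DLM : D = L *m M.
  apply/matrixP => i j; rewrite !mxE (diffop_binom h (y j) x (ltn_ord i)).
  by apply: eq_bigr => k _; rewrite !mxE.
have detL : \det L = 1.
  rewrite det_trig; last first.
    apply/is_trig_mxP => i k ik; rewrite mxE /cb bin_small ?mulr0 //.
  by apply: big1 => i _; rewrite mxE /cb subnn expr0 binn mul1r.
have DG : D = diag_mx (\row_(i < n) h ^+ i) *m
     \matrix_(i < n, j < n) (diffop h i (y j) x / h ^+ i).
  rewrite mul_diag_mx; apply/matrixP => i j; rewrite !mxE.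
  rewrite mulrC divfK //; apply: expf_neq0; rewrite gt_eqF //.
have : \det D = \det M by rewrite DLM det_mulmx detL mul1r.
rewrite DG det_mulmx det_diag => <-.
by congr (_ * _); apply: eq_bigr => i _; rewrite mxE.
Qed.

Unset Implicit Arguments.
Set Strict Implicit.

Theorem mainTheorem8 (R : realType) (n : nat) (I : set R) (y : 'I_n -> R -> R) (x : R) :
  open_interval I -> (forall j, Cn_on n I (y j)) -> I x ->
  (0 < wronskian y x ->
     exists h0 : R, 0 < h0 /\ forall h : R, 0 < h -> h < h0 -> 0 < casoratian y h x) /\
  (wronskian y x < 0 ->
     exists h0 : R, 0 < h0 /\ forall h : R, 0 < h -> h < h0 -> casoratian y h x < 0).
Proof.
move=> [oI _] Hy Ix.
have [d0 d0p Hd0] : exists2 d0 : R, 0 < d0 & forall t, `|x - t| < d0 -> I t.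
  by apply: nbhs_ex; apply: open_nbhs_nbhs; split.
set G := fun h : R => \matrix_(i < n, j < n) (diffop h i (y j) x / h ^+ i).
set Wm := \matrix_(i < n, j < n) derive1n i (y j) x.
have cG : forall i j, (fun h => G h i j) @ 0^'+ --> Wm i j.
  move=> i j; apply/cvgrPdist_lt => e e0.
  have [d dp Hd] := cont_eps (((Hy j).1 i (ltn_ord i) x Ix)) e0.
  have mp : 0 < Num.min d d0 / n.+1%:R by rewrite divr_gt0 // lt_min dp d0p.
  near=> h.
  have hp : 0 < h by near: h; exact: nbhs_right_gt.
  have hm : h < Num.min d d0 / n.+1%:R by near: h; exact: nbhs_right_lt.
  have ihb : i%:R * h < Num.min d d0.
    have : n.+1%:R * h < Num.min d d0 by rewrite mulrC -ltr_pdivlMr.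
    have : i%:R * h <= n%:R * h by rewrite ler_pM2r // ler_nat ltnW.
    rewrite -natr1 mulrDl mul1r; lra.
  have := ihb; rewrite lt_min => /andP[ihd ihd0].
  have [xi [/andP[xxi xii] Hxi]] := diffop_mvt (Hy j).1 hp (i:=i) (k:=0) (s:=x)
    ltac:(by rewrite add0n) ltac:(by move=> t /andP[xt ti]; apply: Hd0; rewrite ler0_norm; lra).
  rewrite /G /Wm !mxE Hxi add0n mulrC mulKf; last by apply: expf_neq0; rewrite gt_eqF.
  apply: Hd; rewrite ler0_norm; lra.
have cv := cvg_det cG.
have Wdef : wronskian y x = \det Wm by [].
split => [Wp|Wn].
  have : \forall h \near 0^'+, 0 < \det (G h).
    move/cvgrPdist_lt : cv => /(_ (wronskian y x) Wp).
    apply: filterS => h; rewrite -Wdef => H.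
    have := ler_norm (wronskian y x - \det (G h)); lra.
  move=> /near_right0_ex [h0 h0p Hh0]; exists h0; split => // h hp hh0.
  rewrite casor_eq //; apply: mulr_gt0; last exact: Hh0.
  by apply: prodr_gt0 => i _; apply: exprn_gt0.
have : \forall h \near 0^'+, \det (G h) < 0.
  move/cvgrPdist_lt : cv => /(_ (- wronskian y x) ltac:(rewrite oppr_gt0; exact: Wn)).
  apply: filterS => h; rewrite -Wdef => H.
  have := ler_norm (\det (G h) - wronskian y x); rewrite distrC; lra.
move=> /near_right0_ex [h0 h0p Hh0]; exists h0; split => // h hp hh0.
rewrite casor_eq // pmulr_rlt0 ?Hh0 //; apply: prodr_gt0 => i _; apply: exprn_gt0.
Unshelve. all: by end_near.
Qed.
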